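(* Let $E=\{x:\langle Ax,x\rangle=1\}$, $A=\operatorname{diag}(1/a_1^2,1/a_2^2)$, be an ellipse. For an $n$-periodic billiard trajectory $P=(p_1,\dots,p_n)$ in $E$ with unit side vectors $u_i=(p_{i+1}-p_i)/|p_{i+1}-p_i|$, set $J(P)=-\langle u_1,Ap_1\rangle$. Then $J(P)$ is constant as $P$ varies in a 1-parameter family of $n$-periodic billiard trajectories in $E$.
   Context: An $n$-periodic billiard trajectory in the ellipse $E$ is a closed polygon $P=(p_1,\dots,p_n)$ (indices mod $n$) with all $p_i\in E$ that obeys the law of reflection at every vertex. All sides of such a trajectory are tangent to a common conic confocal with $E$ (the caustic). A 1-parameter family of $n$-periodic billiard trajectories is a continuous family of such polygons all tangent to the same confocal caustic. *)

(* Defs.v *)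
From Stdlib Require Import Reals Lra.
Open Scope R_scope.

Definition pt : Type := (R * R)%type.
Definition vadd (x y : pt) : pt := (fst x + fst y, snd x + snd y).
Definition vsub (x y : pt) : pt := (fst x - fst y, snd x - snd y).
Definition vscal (c : R) (x : pt) : pt := (c * fst x, c * snd x).
Definition dot (x y : pt) : R := fst x * fst y + snd x * snd y.
Definition vnorm (x : pt) : R := sqrt (dot x x).

Definition Amat (a1 a2 : R) (x : pt) : pt := (fst x / a1 ^ 2, snd x / a2 ^ 2).
Definition on_ellipse (a1 a2 : R) (x : pt) : Prop := dot (Amat a1 a2 x) x = 1.

(* A polygon is a sequence of vertices p : nat -> pt, indices taken mod n
   via n-periodicity; vertex p_1 of the paper is p 0. *)
Definition side (p : nat -> pt) (i : nat) : pt := vsub (p (S i)) (p i).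
Definition unit_side (p : nat -> pt) (i : nat) : pt :=
  vscal (/ vnorm (side p i)) (side p i).

(* Law of reflection at vertex p (S i): the outgoing unit direction is the
   mirror image of the incoming one in the tangent line of E at p (S i),
   whose normal is A p (S i). *)
Definition reflection_law (a1 a2 : R) (p : nat -> pt) (i : nat) : Prop :=
  let N := Amat a1 a2 (p (S i)) in
  let u := unit_side p i in
  unit_side p (S i) = vsub u (vscal (2 * dot u N / dot N N) N).

Definition billiard_traj (a1 a2 : R) (n : nat) (p : nat -> pt) : Prop :=
  (0 < n)%nat /\
  (forall i, p (i + n)%nat = p i) /\
  (forall i, on_ellipse a1 a2 (p i)) /\
  (forall i, p (S i) <> p i) /\
  (forall i, reflection_law a1 a2 p i).

Definition Cmat (a1 a2 lam : R) (x : pt) : pt :=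
  (fst x / (a1 ^ 2 - lam), snd x / (a2 ^ 2 - lam)).
Definition on_conic (a1 a2 lam : R) (x : pt) : Prop :=
  dot (Cmat a1 a2 lam x) x = 1.

Definition line_tangent (a1 a2 lam : R) (x d : pt) : Prop :=
  exists s : R, let q := vadd x (vscal s d) in
    on_conic a1 a2 lam q /\ dot (Cmat a1 a2 lam q) d = 0.

Definition has_caustic (a1 a2 lam : R) (p : nat -> pt) : Prop :=
  lam <> a1 ^ 2 /\ lam <> a2 ^ 2 /\
  forall i, line_tangent a1 a2 lam (p i) (side p i).

Definition J (a1 a2 : R) (p : nat -> pt) : R :=
  - dot (unit_side p 0%nat) (Amat a1 a2 (p 0%nat)).

Definition is_interval (I : R -> Prop) : Prop :=
  forall x y z, I x -> I z -> x <= y <= z -> I y.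

Definition family_continuous (I : R -> Prop) (F : R -> nat -> pt) : Prop :=
  forall (i : nat) (t : R), I t ->
    forall eps : R, 0 < eps -> exists delta : R, 0 < delta /\
      forall s : R, I s -> Rabs (s - t) < delta ->
        Rabs (fst (F s i) - fst (F t i)) < eps /\
        Rabs (snd (F s i) - snd (F t i)) < eps.

Definition billiard_family (a1 a2 lam : R) (n : nat) (I : R -> Prop)
    (F : R -> nat -> pt) : Prop :=
  is_interval I /\ family_continuous I F /\
  (forall t, I t -> billiard_traj a1 a2 n (F t) /\ has_caustic a1 a2 lam (F t)).

(* Main.v *)
Require Import Defs.
From Stdlib Require Import Reals Lra Psatz.
Open Scope R_scope.

Lemma key_alg (a b l x1 x2 d1 d2 s : R) :
  0 < a -> 0 < b -> a^2 - l <> 0 -> b^2 - l <> 0 ->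
  x1 / a^2 * x1 + x2 / b^2 * x2 = 1 ->
  (x1 + s*d1) / (a^2 - l) * (x1 + s*d1) + (x2 + s*d2) / (b^2 - l) * (x2 + s*d2) = 1 ->
  (x1 + s*d1) / (a^2 - l) * d1 + (x2 + s*d2) / (b^2 - l) * d2 = 0 ->
  (b^2*x1*d1 + a^2*x2*d2)^2 = l * a^2 * b^2 * (d1^2 + d2^2).
Proof.
  intros Ha Hb Hal Hbl HE HC HT.
  set (al := a^2 - l) in *. set (be := b^2 - l) in *.
  set (P := (x1 + s*d1)/al). set (Q := (x2 + s*d2)/be).
  assert (HP : x1 + s*d1 = al * P) by (unfold P; field; exact Hal).
  assert (HQ : x2 + s*d2 = be * Q) by (unfold Q; field; exact Hbl).
  fold P Q in HC, HT.
  assert (HC' : al * P^2 + be * Q^2 = 1).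
  { rewrite HP, HQ in HC. rewrite <- HC. field; auto. }
  assert (Ha2 : a^2 <> 0) by (apply pow_nonzero; lra).
  assert (Hb2 : b^2 <> 0) by (apply pow_nonzero; lra).
  assert (HE' : b^2*x1^2 + a^2*x2^2 = a^2*b^2).
  { apply (Rmult_eq_reg_r (/ (a^2*b^2))).
    2: { apply Rinv_neq_0_compat; apply Rmult_integral_contrapositive; auto. }
    transitivity (x1 / a^2 * x1 + x2 / b^2 * x2).
    { field. split; lra. }
    rewrite HE. field. split; lra. }
  set (M := x1*d2 - x2*d1).
  assert (F1 : (b^2*d1^2 + a^2*d2^2)*(b^2*x1^2 + a^2*x2^2)
     = (b^2*x1*d1 + a^2*x2*d2)^2 + a^2*b^2*M^2) by (unfold M; ring).
  assert (HM : M = al * P * d2 - be * Q * d1).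
  { unfold M. replace x1 with (al*P - s*d1) by lra.
    replace x2 with (be*Q - s*d2) by lra. ring. }
  assert (F2 : M^2 = al*d2^2 + be*d1^2).
  { rewrite HM.
    assert (Hz : P*d1 + Q*d2 = 0) by exact HT.
    transitivity ((al*d2^2 + be*d1^2)*(al*P^2+be*Q^2) - al*be*(P*d1+Q*d2)^2).
    - ring.
    - rewrite HC', Hz. ring. }
  rewrite HE' in F1.
  assert (HF : (b^2*x1*d1 + a^2*x2*d2)^2 = a^2*b^2*(b^2*d1^2 + a^2*d2^2 - M^2)) by lra.
  rewrite HF, F2. unfold al, be. ring.
Qed.

Lemma J_props (a1 a2 lam : R) (n : nat) (p : nat -> pt) :
  0 < a1 -> 0 < a2 -> billiard_traj a1 a2 n p -> has_caustic a1 a2 lam p ->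
  0 <= J a1 a2 p /\ (J a1 a2 p)^2 = lam / (a1^2 * a2^2).
Proof.
  intros H1 H2 [_ [_ [Hon [Hne _]]]] [Hl1 [Hl2 Htan]].
  destruct (Htan 0%nat) as [s [Hc Ht]].
  pose proof (Hon 0%nat) as E0. pose proof (Hon 1%nat) as E1.
  pose proof (Hne 0%nat) as N0.
  unfold J, unit_side, side, vnorm, vscal, vsub, dot, Amat in *.
  unfold on_ellipse, on_conic, Cmat, vadd, vscal, dot, Amat in *.
  destruct (p 0%nat) as [x1 x2]. destruct (p 1%nat) as [y1 y2].
  simpl in *. change (a1*(a1*1)) with (a1^2) in *. change (a2*(a2*1)) with (a2^2) in *.
  set (d1 := y1 - x1) in *. set (d2 := y2 - x2) in *.
  assert (Hd : 0 < d1*d1 + d2*d2).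
  { destruct (Req_dec d1 0) as [e1|e1]; [destruct (Req_dec d2 0) as [e2|e2]|].
    - exfalso; apply N0; f_equal; unfold d1, d2 in *; lra.
    - nra.
    - nra. }
  assert (Hsq := sqrt_lt_R0 _ Hd).
  assert (Hss := sqrt_sqrt _ (Rlt_le _ _ Hd)).
  assert (Ha2 : 0 < a1^2) by (apply pow_lt; lra).
  assert (Hb2 : 0 < a2^2) by (apply pow_lt; lra).
  assert (K := key_alg a1 a2 lam x1 x2 d1 d2 s H1 H2
                 ltac:(intro; apply Hl1; lra) ltac:(intro; apply Hl2; lra) E0 Hc Ht).
  set (r := sqrt (d1*d1+d2*d2)) in *.
  assert (Hdot : d1 * (x1/a1^2) + d2 * (x2/a2^2) <= 0).
  { assert (Hy : y1 = x1 + d1) by (unfold d1; ring).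
    assert (Hy2 : y2 = x2 + d2) by (unfold d2; ring).
    rewrite Hy, Hy2 in E1.
    assert (ex : (x1 + d1) / a1 ^ 2 * (x1 + d1) + (x2 + d2) / a2 ^ 2 * (x2 + d2)
      = (x1/a1^2*x1 + x2/a2^2*x2) + 2*(d1 * (x1/a1^2) + d2*(x2/a2^2))
        + (d1/a1^2*d1 + d2/a2^2*d2)) by (field; split; lra).
    assert (0 <= d1/a1^2*d1) by (unfold Rdiv; rewrite Rmult_comm, <- Rmult_assoc;
      apply Rmult_le_pos; [nra| apply Rlt_le, Rinv_0_lt_compat; lra]).
    assert (0 <= d2/a2^2*d2) by (unfold Rdiv; rewrite Rmult_comm, <- Rmult_assoc;
      apply Rmult_le_pos; [nra| apply Rlt_le, Rinv_0_lt_compat; lra]).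
    lra. }
  split.
  - assert (e : - (/ r * d1 * (x1 / a1 ^ 2) + / r * d2 * (x2 / a2 ^ 2))
             = / r * (- (d1 * (x1/a1^2) + d2*(x2/a2^2)))) by ring.
    rewrite e. apply Rmult_le_pos; [apply Rlt_le, Rinv_0_lt_compat; lra | lra].
  - assert (e : - (/ r * d1 * (x1 / a1 ^ 2) + / r * d2 * (x2 / a2 ^ 2)) *
  (- (/ r * d1 * (x1 / a1 ^ 2) + / r * d2 * (x2 / a2 ^ 2)) * 1)
        = (a2^2*x1*d1 + a1^2*x2*d2)^2 / (r*r) / (a1^2*a2^2)^2).
    { field. lra. }
    rewrite e, Hss, K. field. lra.
Qed.

Theorem corollary2p2 (a1 a2 lam : R) (n : nat) (I : R -> Prop)
    (F : R -> nat -> pt) :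
  0 < a1 -> 0 < a2 ->
  billiard_family a1 a2 lam n I F ->
  forall s t : R, I s -> I t -> J a1 a2 (F s) = J a1 a2 (F t).
Proof.
  intros H1 H2 [_ [_ Hf]] s t Is It.
  destruct (Hf s Is) as [Bs Cs]. destruct (Hf t It) as [Bt Ct].
  destruct (J_props _ _ _ _ _ H1 H2 Bs Cs) as [Ps Qs].
  destruct (J_props _ _ _ _ _ H1 H2 Bt Ct) as [Pt Qt].
  rewrite <- Qt in Qs. nra.
Qed.
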